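(* (i) Let $v_2^\star$ denote the Switcher's optimal value function (for fixed Exploiter policy $\pi^{\mathrm{exploit}}$) and $\mathcal M$ the intervention operator associated with the optimal exploration policy. Then the optimal Switcher's intervention times are given recursively by $$\tau_k=\inf\{t>\tau_{k-1}: (\mathcal M v_2^\star)(s_t)=v_2^\star(s_t)\}.$$ (ii) For $l>0$, denote by $\mu_l(\mathfrak g)$ the number of switch activations performed by the Switcher under its (optimal) switching policy $\mathfrak g$ when $\max_{(s,a)\in\mathcal S\times\mathcal A}L(s,a)=l$. Then $\lim_{l\to0}\mu_l(\mathfrak g)=0$.
   Context: Setting (a two-agent game). $\mathcal S$ is a countable state space, $\mathcal A$ a finite action set, $\mathcal A^{\mathrm{exploit}},\mathcal A^{\mathrm{xplr}}\subseteq\mathcal A$; $P(s'\mid a,s)$ is a transition kernel; $L:\mathcal S\times\mathcal A\to[0,\infty)$ is a bounded uncertainty measure; $\gamma\in(0,1)$; $\beta>0$ is an intervention cost. The Exploiter has a Markov policy $\pi^{\mathrm{exploit}}$; the Switcher has an exploration policy $\pi^{\mathrm{xplr}}$ and a switching rule $\mathfrak g:\mathcal S\to\{0,1\}$. At time $t$, if $\mathfrak g(s_t)=1$ (an intervention), the action $a_t\sim\pi^{\mathrm{xplr}}(\cdot\mid s_t)$ is applied and the Switcher receives $-L(s_t,a_t)-\beta$; otherwise $a_t\sim\pi^{\mathrm{exploit}}(\cdot\mid s_t)$ is applied and the Switcher receives $-L(s_t,a_t)$; then $s_{t+1}\sim P(\cdot\mid a_t,s_t)$. The Switcher's value is $v_2(s)=\mathbb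 E[\sum_{t\ge0}\gamma^t r_t\mid s_0=s]$ with $r_t$ its reward at time $t$; the optimal value $v_2^\star$ is the supremum over $(\pi^{\mathrm{xplr}},\mathfrak g)$. Intervention times: $\tau_0=0$ and $\tau_k=\inf\{t>\tau_{k-1}:\mathfrak g(s_t)=1\}$. Intervention operator: for $v:\mathcal S\to\mathbb R$, $(\mathcal M v)(s)=\sum_{a}\pi^{\mathrm{xplr}}(a\mid s)\big[-L(s,a)-\beta+\gamma\sum_{s'}P(s'\mid a,s)v(s')\big]$. Standing assumption: every switching policy performs only finitely many interventions. *)

(* Defs.v *)
From Stdlib Require Import Reals List.
From Coquelicot Require Import Coquelicot.
From mathcomp Require Import ssreflect ssrbool eqtype choice fintype.

Set Implicit Arguments.
Unset Strict Implicit.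
Open Scope R_scope.

(* Sum over a countable type, through its canonical enumeration by nat
   (each element appears exactly once; used only for absolutely summable f). *)
Definition enc_seq {St : countType} (f : St -> R) (n : nat) : R :=
  match @pickle_inv St n with Some x => f x | None => 0 end.
Definition sumS {St : countType} (f : St -> R) : R := Series (enc_seq f).

Definition sumA {A : finType} (f : A -> R) : R :=
  fold_right (fun a acc => f a + acc) 0 (enum A).

Definition is_distS {St : countType} (d : St -> R) : Prop :=
  (forall x, 0 <= d x) /\ ex_series (enc_seq d) /\ sumS d = 1.
Definition is_distA {A : finType} (d : A -> R) : Prop :=
  (forall a, 0 <= d a) /\ sumA d = 1.

(* P s a s' = P(s' | a, s) ; pi s a = pi(a | s) (stationary Markov policy) *)
Definition is_kernel {St : countType} {A : finType} (P : St -> A -> St -> R) :=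
  forall s a, is_distS (P s a).
Definition is_policy {St : countType} {A : finType} (pi : St -> A -> R) :=
  forall s, is_distA (pi s).

Section Game.
Context {St : countType} {A : finType}.
Variables (P : St -> A -> St -> R) (piE : St -> A -> R) (gamma beta : R)
          (L : St -> A -> R).

Definition act_dist (piX : St -> A -> R) (g : St -> bool) (s : St) : A -> R :=
  if g s then piX s else piE s.

Definition reward (piX : St -> A -> R) (g : St -> bool) (s : St) : R :=
  sumA (fun a => act_dist piX g s a * (- L s a - (if g s then beta else 0))).

Fixpoint state_dist (piX : St -> A -> R) (g : St -> bool) (s0 : St) (t : nat)
  : St -> R :=
  match t with
  | O => fun s => if s == s0 then 1 else 0
  | Datatypes.S t' => fun s' =>
      sumS (fun s => state_dist piX g s0 t' s *
                     sumA (fun a => act_dist piX g s a * P s a s'))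
  end.

Definition exp_reward piX g s0 (t : nat) : R :=
  sumS (fun s => state_dist piX g s0 t s * reward piX g s).

Definition value piX g (s0 : St) : R :=
  Series (fun t => gamma ^ t * exp_reward piX g s0 t).

Definition vstar (s : St) : R :=
  real (Lub_Rbar (fun x => exists piX g, is_policy piX /\ x = value piX g s)).

Definition is_optimal piX g : Prop :=
  is_policy piX /\ forall s, value piX g s = vstar s.

Definition Mop (piX : St -> A -> R) (v : St -> R) (s : St) : R :=
  sumA (fun a => piX s a *
                 (- L s a - beta + gamma * sumS (fun s' => P s a s' * v s'))).

Definition gstar (piX : St -> A -> R) (v : St -> R) (s : St) : bool :=
  if Req_EM_T (Mop piX v s) (v s) then true else false.

End Game.

Definition mu {St : countType} {A : finType} (P : St -> A -> St -> R)
  (piE piX : St -> A -> R) (g : St -> bool) (s0 : St) : Rbar :=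
  Lim_seq (sum_n (fun t =>
    sumS (fun s => state_dist P piE piX g s0 t s * (if g s then 1 else 0)))).

(* Main.v *)
Require Import Defs.
From Stdlib Require Import Reals Lra Lia.
From Coquelicot Require Import Coquelicot.
From mathcomp Require Import ssreflect ssrbool eqtype choice fintype.
Open Scope R_scope.
Lemma is_series_lim (a : nat -> R) (l : R) : is_lim_seq (sum_n a) l -> is_series a l.
Proof. exact. Qed.
Lemma lim_is_series (a : nat -> R) (l : R) : is_series a l -> is_lim_seq (sum_n a) l.
Proof. exact. Qed.

Lemma exs_ext (a b : nat -> R) : ex_series a -> (forall n, a n = b n) -> ex_series b.
Proof. move=> H E; exact: (ex_series_ext a b E H). Qed.

Lemma sum_n_nonneg (a : nat -> R) N : (forall n, 0 <= a n) -> 0 <= sum_n a N.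
Proof.
move=> H; elim: N => [|N IH]; first by rewrite sum_O.
rewrite sum_Sn; have := H (S N); rewrite /plus /=; lra.
Qed.

Lemma sum_n_incr (a : nat -> R) N : (forall n, 0 <= a n) -> sum_n a N <= sum_n a (S N).
Proof. move=> H; rewrite sum_Sn; have := H (S N); rewrite /plus /=; lra. Qed.

Lemma nn_bounded (a : nat -> R) M : (forall n, 0 <= a n) -> (forall N, sum_n a N <= M) ->
  ex_series a /\ Series a <= M.
Proof.
move=> H0 HM.
have [l Hl] : ex_finite_lim_seq (sum_n a).
  apply: (ex_finite_lim_seq_incr _ M) => //; move=> n; exact: sum_n_incr.
have Hs : is_series a l by apply: is_series_lim.
split; first by exists l.
rewrite (is_series_unique _ _ Hs).
have := is_lim_seq_le _ _ _ _ HM Hl (is_lim_seq_const M). by [].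
Qed.

Lemma psum_le (a : nat -> R) N : (forall n, 0 <= a n) -> ex_series a -> sum_n a N <= Series a.
Proof.
move=> H0 [l Hl]. rewrite (is_series_unique _ _ Hl).
apply: (is_lim_seq_incr_compare (sum_n a)) => //. move=> n; exact: sum_n_incr.
Qed.

Lemma Series_nonneg (a : nat -> R) : (forall n, 0 <= a n) -> 0 <= Series a.
Proof.
move=> H. rewrite /Series.
have Hm : forall n, sum_n a n <= sum_n a (S n) by move=> n; apply: sum_n_incr.
have := ex_lim_seq_incr _ Hm. move=> Hex.
have := Lim_seq_correct _ Hex.
case E: (Lim_seq (sum_n a)) => [r| |] /= HL; try lra.
have := is_lim_seq_le (fun _ => 0) _ 0 r (fun n => sum_n_nonneg a n H) (is_lim_seq_const 0) HL. by [].
Qed.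

Lemma term_le_Series (a : nat -> R) n : (forall n, 0 <= a n) -> ex_series a -> a n <= Series a.
Proof.
move=> H0 Hs. apply: Rle_trans (psum_le a n H0 Hs).
case: n => [|n]; first by rewrite sum_O; lra.
rewrite sum_Sn /plus /=. have := sum_n_nonneg a n H0. lra.
Qed.

Lemma sum_n_Series (F : nat -> nat -> R) M : (forall j, ex_series (fun i => F i j)) ->
  ex_series (fun i => sum_n (F i) M) /\
  sum_n (fun j => Series (fun i => F i j)) M = Series (fun i => sum_n (F i) M).
Proof.
move=> H. elim: M => [|M [IH1 IH2]].
  split. apply: exs_ext (H O) _ => i; by rewrite sum_O.
  rewrite sum_O; apply: Series_ext => i; by rewrite sum_O.
split.
  apply: exs_ext (ex_series_plus _ _ IH1 (H (S M))) _ => i; by rewrite sum_Sn.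
rewrite sum_Sn IH2 /plus /= -(Series_plus _ _ IH1 (H (S M))).
apply: Series_ext => i; by rewrite sum_Sn.
Qed.

Lemma fub_le (F : nat -> nat -> R) : (forall i j, 0 <= F i j) ->
  (forall i, ex_series (F i)) -> ex_series (fun i => Series (F i)) ->
  (forall j, ex_series (fun i => F i j)) /\
  ex_series (fun j => Series (fun i => F i j)) /\
  Series (fun j => Series (fun i => F i j)) <= Series (fun i => Series (F i)).
Proof.
move=> H0 Hr Ho.
have Hcol : forall j, ex_series (fun i => F i j).
  move=> j. apply: (proj1 (nn_bounded _ (Series (fun i => Series (F i))) _ _)) => // N.
  apply: Rle_trans (psum_le _ N _ Ho); last by move=> n; apply: Series_nonneg.
  elim: N => [|N IH]; first by rewrite !sum_O; apply: term_le_Series.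
  rewrite !sum_Sn /plus /=. have := term_le_Series (F (S N)) j (H0 (S N)) (Hr (S N)). lra.
have [Hex Hle] : ex_series (fun j => Series (fun i => F i j)) /\
  Series (fun j => Series (fun i => F i j)) <= Series (fun i => Series (F i)).
  apply: nn_bounded.
    move=> j; apply: Series_nonneg => i; exact: H0.
  move=> M. have [E1 E2] := sum_n_Series F M Hcol. rewrite E2.
  apply: Series_le; last exact: Ho. move=> i; split.
    apply: sum_n_nonneg => j; exact: H0.
  apply: psum_le; [move=> n; exact: H0 | exact: Hr].
by [].
Qed.

Lemma fub_nn (F : nat -> nat -> R) : (forall i j, 0 <= F i j) ->
  (forall i, ex_series (F i)) -> ex_series (fun i => Series (F i)) ->
  (forall j, ex_series (fun i => F i j)) /\
  ex_series (fun j => Series (fun i => F i j)) /\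
  Series (fun j => Series (fun i => F i j)) = Series (fun i => Series (F i)).
Proof.
move=> H0 Hr Ho. have [Hc [Hco Hle]] := fub_le F H0 Hr Ho.
have [_ [_ Hle2]] := fub_le (fun j i => F i j) (fun j i => H0 i j) Hc Hco.
split; first exact: Hc. split; first exact: Hco.
apply: Rle_antisym => //.
Qed.

Lemma fub_abs (F : nat -> nat -> R) :
  (forall i, ex_series (fun j => Rabs (F i j))) ->
  ex_series (fun i => Series (fun j => Rabs (F i j))) ->
  (forall j, ex_series (fun i => F i j)) /\
  ex_series (fun j => Series (fun i => F i j)) /\
  Series (fun j => Series (fun i => F i j)) = Series (fun i => Series (F i)).
Proof.
move=> Hr Ho.
pose G i j := Rabs (F i j). pose H i j := Rabs (F i j) + F i j.
have HG0 : forall i j, 0 <= G i j by move=> i j; apply: Rabs_pos.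
have HH0 : forall i j, 0 <= H i j.
  move=> i j; rewrite /H; have := Rabs_pos (F i j); have := Rle_abs (- F i j); rewrite Rabs_Ropp; lra.
have HrF : forall i, ex_series (F i) by move=> i; apply: ex_series_Rabs; exact: Hr.
have HrH : forall i, ex_series (H i).
  move=> i; apply: exs_ext (ex_series_plus _ _ (Hr i) (HrF i)) _ => j; by [].
have HSH : forall i, Series (H i) = Series (fun j => Rabs (F i j)) + Series (F i).
  move=> i; rewrite -Series_plus //; exact: HrF.
have HoF : ex_series (fun i => Series (F i)).
  apply: ex_series_le Ho => i. rewrite /norm /= /abs /=. apply: Series_Rabs; exact: Hr.
have HoH : ex_series (fun i => Series (H i)).
  apply: exs_ext (ex_series_plus _ _ Ho HoF) _ => i; by rewrite HSH.
have [Gc [Gco Ge]] := fub_nn G HG0 Hr Ho.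
have [Hc [Hco He]] := fub_nn H HH0 HrH HoH.
have Fc : forall j, ex_series (fun i => F i j).
  move=> j; apply: exs_ext (ex_series_minus _ _ (Hc j) (Gc j)) _ => i.
  rewrite /H /G /plus /opp /=; ring.
have EF : forall j, Series (fun i => F i j) = Series (fun i => H i j) - Series (fun i => G i j).
  move=> j; rewrite -Series_minus //; apply: Series_ext => i; rewrite /H /G; ring.
split => //. split.
  apply: exs_ext (ex_series_minus _ _ Hco Gco) _ => j. by rewrite EF.
rewrite (Series_ext _ _ EF) Series_minus // He Ge.
rewrite (Series_ext _ _ HSH) (Series_plus _ _ Ho HoF) /G /=. ring.
Qed.

Lemma Series_zero : Series (fun _ => 0) = 0.
Proof.
rewrite (Series_ext (fun _ => 0) (fun n => 0 * 0)); last by move=> n; ring.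
by rewrite Series_scal_l Rmult_0_l.
Qed.

Lemma ex_series_zero : ex_series (fun _ : nat => 0).
Proof.
apply: (proj1 (nn_bounded _ 0 _ _)) => [n|N]; first lra.
rewrite sum_n_const; lra.
Qed.

Section CS.
Variable St : countType.

Lemma enc_ext (f g : St -> R) n : (forall x, f x = g x) -> enc_seq f n = enc_seq g n.
Proof. move=> H; rewrite /enc_seq; case: (pickle_inv n) => [x|] //. Qed.

Lemma sumS_ext (f g : St -> R) : (forall x, f x = g x) -> sumS f = sumS g.
Proof. move=> H; apply: Series_ext => n; exact: enc_ext. Qed.

Lemma enc_pickle (f : St -> R) x : enc_seq f (pickle x) = f x.
Proof. by rewrite /enc_seq pickleK_inv. Qed.

Lemma enc_Series (G : nat -> St -> R) k :
  enc_seq (fun x => Series (fun n => G n x)) k = Series (fun n => enc_seq (G n) k).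
Proof.
rewrite /enc_seq; case: (pickle_inv k) => [x|] //. by rewrite Series_zero.
Qed.

Lemma Rabs_enc (f : St -> R) n : Rabs (enc_seq f n) = enc_seq (fun x => Rabs (f x)) n.
Proof. rewrite /enc_seq; case: (pickle_inv n) => [x|] //; exact: Rabs_R0. Qed.

Lemma sumS_zero : sumS (fun _ : St => 0) = 0.
Proof.
have E : forall n, enc_seq (fun _ : St => 0) n = 0 by move=> n; rewrite /enc_seq; case: (pickle_inv n).
rewrite /sumS (Series_ext _ _ E); exact: Series_zero.
Qed.

Lemma ex_zero_enc : ex_series (enc_seq (fun _ : St => 0)).
Proof. apply: exs_ext ex_series_zero _ => n; rewrite /enc_seq; by case: (pickle_inv n). Qed.

Lemma fubSN (F : St -> nat -> R) :
  (forall x, ex_series (fun t => Rabs (F x t))) ->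
  ex_series (enc_seq (fun x => Series (fun t => Rabs (F x t)))) ->
  (forall t, ex_series (enc_seq (fun x => F x t))) /\
  ex_series (fun t => sumS (fun x => F x t)) /\
  Series (fun t => sumS (fun x => F x t)) = sumS (fun x => Series (F x)).
Proof.
move=> Hr Ho.
pose H n t := enc_seq (fun x => F x t) n.
have Hr' : forall n, ex_series (fun t => Rabs (H n t)).
  move=> n; rewrite /H /enc_seq; case: (pickle_inv n) => [x|]; first exact: Hr.
  apply: exs_ext ex_series_zero _ => t; by rewrite Rabs_R0.
have Ho' : ex_series (fun n => Series (fun t => Rabs (H n t))).
  apply: exs_ext Ho _ => n. rewrite enc_Series. apply: Series_ext => t. by rewrite Rabs_enc.
have [Hc [Hco He]] := fub_abs H Hr' Ho'.
split; first exact: Hc. split; first exact: Hco.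
rewrite /sumS He. apply: Series_ext => n. by rewrite enc_Series.
Qed.

Lemma fubSS (F : St -> St -> R) :
  (forall x, ex_series (enc_seq (fun y => Rabs (F x y)))) ->
  ex_series (enc_seq (fun x => sumS (fun y => Rabs (F x y)))) ->
  (forall y, ex_series (enc_seq (fun x => F x y))) /\
  ex_series (enc_seq (fun y => sumS (fun x => F x y))) /\
  sumS (fun y => sumS (fun x => F x y)) = sumS (fun x => sumS (F x)).
Proof.
move=> Hr Ho.
pose F' x m := enc_seq (F x) m.
have Hr' : forall x, ex_series (fun m => Rabs (F' x m)).
  move=> x; apply: exs_ext (Hr x) _ => m; by rewrite /F' Rabs_enc.
have Ho' : ex_series (enc_seq (fun x => Series (fun m => Rabs (F' x m)))).
  apply: exs_ext Ho _ => n. rewrite /enc_seq; case: (pickle_inv n) => [x|] //.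
  rewrite /sumS; apply: Series_ext => m; by rewrite /F' Rabs_enc.
have [Hc [Hco He]] := fubSN F' Hr' Ho'.
have Eo : forall m, enc_seq (fun y => sumS (fun x => F x y)) m = sumS (fun x => F' x m).
  move=> m; rewrite /F' /enc_seq; case: (pickle_inv m) => [y|] //.
  symmetry; exact: sumS_zero.
split.
  move=> y; apply: exs_ext (Hc (pickle y)) _ => n. rewrite /F'.
  apply: enc_ext => x; exact: enc_pickle.
split.
  apply: exs_ext Hco _ => m; by rewrite Eo.
rewrite {1}/sumS (Series_ext _ _ Eo) He. by [].
Qed.

Lemma spike_series (u : nat -> R) k : (forall n, n <> k -> u n = 0) -> is_series u (u k).
Proof.
move=> Hu.
have Hs : forall N, sum_n u N = if Nat.leb k N then u k else 0.
  elim=> [|N IH].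
    rewrite sum_O. case: k Hu => [|k] Hu //=. by apply: Hu.
  rewrite sum_Sn IH /plus /=.
  case E: (Nat.leb k N); case E2: (Nat.leb k (S N)).
  - rewrite (Hu (S N)); [ring|]. move/Nat.leb_le: E. lia.
  - move/Nat.leb_le: E => E. move/Nat.leb_nle: E2. lia.
  - move/Nat.leb_nle: E => E. move/Nat.leb_le: E2 => E2.
    have -> : S N = k by lia. ring.
  - rewrite (Hu (S N)); [ring|]. move/Nat.leb_nle: E2. lia.
apply: is_series_lim.
apply/(is_lim_seq_incr_n _ k).
apply: is_lim_seq_ext (is_lim_seq_const (u k)) => n.
rewrite Hs. have -> : Nat.leb k (n + k) = true by apply/Nat.leb_le; lia. by [].
Qed.

Lemma spikeS (f : St -> R) x0 : (forall x, x <> x0 -> f x = 0) ->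
  ex_series (enc_seq f) /\ sumS f = f x0.
Proof.
move=> Hf.
have H : is_series (enc_seq f) (enc_seq f (pickle x0)).
  apply: spike_series => n Hn. rewrite /enc_seq.
  case E: (pickle_inv n) => [x|] //. apply: Hf => Ex. subst x.
  apply: Hn. have := @pickle_invK St n. by rewrite E.
split; first by eexists; exact: H.
rewrite /sumS (is_series_unique _ _ H). exact: enc_pickle.
Qed.

End CS.
Arguments enc_ext {St}. Arguments sumS_ext {St}. Arguments enc_pickle {St}. Arguments enc_Series {St}. Arguments Rabs_enc {St}.
Arguments sumS_zero {St}. Arguments ex_zero_enc {St}. Arguments fubSN {St}. Arguments fubSS {St}. Arguments spikeS {St}.


Section CS2.
Variable St : countType.
Implicit Types f g : St -> R.

Lemma enc_plus f g n : enc_seq (fun x => f x + g x) n = enc_seq f n + enc_seq g n.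
Proof. rewrite /enc_seq; case: (pickle_inv n) => [x|] //; ring. Qed.
Lemma enc_minus f g n : enc_seq (fun x => f x - g x) n = enc_seq f n - enc_seq g n.
Proof. rewrite /enc_seq; case: (pickle_inv n) => [x|] //; ring. Qed.
Lemma enc_scal_l c f n : enc_seq (fun x => c * f x) n = c * enc_seq f n.
Proof. rewrite /enc_seq; case: (pickle_inv n) => [x|] //; ring. Qed.
Lemma enc_scal_r c f n : enc_seq (fun x => f x * c) n = enc_seq f n * c.
Proof. rewrite /enc_seq; case: (pickle_inv n) => [x|] //; ring. Qed.

Lemma exS_plus f g : ex_series (enc_seq f) -> ex_series (enc_seq g) ->
  ex_series (enc_seq (fun x => f x + g x)).
Proof. move=> Hf Hg; apply: exs_ext (ex_series_plus _ _ Hf Hg) _ => n; by rewrite enc_plus. Qed.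
Lemma exS_minus f g : ex_series (enc_seq f) -> ex_series (enc_seq g) ->
  ex_series (enc_seq (fun x => f x - g x)).
Proof. move=> Hf Hg; apply: exs_ext (ex_series_minus _ _ Hf Hg) _ => n; by rewrite enc_minus. Qed.
Lemma exS_scal_l c f : ex_series (enc_seq f) -> ex_series (enc_seq (fun x => c * f x)).
Proof. move=> Hf; apply: exs_ext (ex_series_scal_l c _ Hf) _ => n; by rewrite enc_scal_l. Qed.
Lemma exS_scal_r c f : ex_series (enc_seq f) -> ex_series (enc_seq (fun x => f x * c)).
Proof. move=> Hf; apply: exs_ext (ex_series_scal_r c _ Hf) _ => n; by rewrite enc_scal_r. Qed.

Lemma sumS_plus f g : ex_series (enc_seq f) -> ex_series (enc_seq g) ->
  sumS (fun x => f x + g x) = sumS f + sumS g.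
Proof.
move=> Hf Hg; rewrite /sumS -Series_plus //. apply: Series_ext => n; by rewrite enc_plus.
Qed.
Lemma sumS_minus f g : ex_series (enc_seq f) -> ex_series (enc_seq g) ->
  sumS (fun x => f x - g x) = sumS f - sumS g.
Proof.
move=> Hf Hg; rewrite /sumS -Series_minus //. apply: Series_ext => n; by rewrite enc_minus.
Qed.
Lemma sumS_scal_l c f : sumS (fun x => c * f x) = c * sumS f.
Proof. rewrite /sumS -Series_scal_l. apply: Series_ext => n; by rewrite enc_scal_l. Qed.
Lemma sumS_scal_r c f : sumS (fun x => f x * c) = sumS f * c.
Proof. rewrite /sumS -Series_scal_r. apply: Series_ext => n; by rewrite enc_scal_r. Qed.

Lemma exS_le f g : (forall x, Rabs (f x) <= g x) -> ex_series (enc_seq g) -> ex_series (enc_seq f).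
Proof.
move=> H Hg. apply: (ex_series_le _ _ _ Hg) => n.
rewrite /norm /= /abs /= /enc_seq; case: (pickle_inv n) => [x|] //.
rewrite Rabs_R0; lra.
Qed.

Lemma sumS_nonneg f : (forall x, 0 <= f x) -> 0 <= sumS f.
Proof. move=> H; apply: Series_nonneg => n; rewrite /enc_seq; case: (pickle_inv n) => [x|] //; lra. Qed.

Lemma sumS_le f g : ex_series (enc_seq f) -> ex_series (enc_seq g) -> (forall x, f x <= g x) ->
  sumS f <= sumS g.
Proof.
move=> Hf Hg H. have := sumS_nonneg (fun x => g x - f x) (fun x => ltac:(have := H x; lra)).
rewrite sumS_minus //. lra.
Qed.

Lemma sumS_abs f : ex_series (enc_seq (fun x => Rabs (f x))) -> Rabs (sumS f) <= sumS (fun x => Rabs (f x)).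
Proof.
move=> H. rewrite /sumS.
have E : forall n, Rabs (enc_seq f n) = enc_seq (fun x => Rabs (f x)) n by move=> n; exact: Rabs_enc.
rewrite -(Series_ext _ _ E). apply: Series_Rabs. exact: exs_ext H _.
Qed.

Lemma termS_le f x : (forall x, 0 <= f x) -> ex_series (enc_seq f) -> f x <= sumS f.
Proof.
move=> H0 H. rewrite -(enc_pickle f x). apply: term_le_Series => // n.
rewrite /enc_seq; case: (pickle_inv n) => [y|] //; lra.
Qed.

End CS2.
Arguments enc_plus {St}. Arguments enc_minus {St}. Arguments enc_scal_l {St}. Arguments enc_scal_r {St}. Arguments exS_plus {St}. Arguments exS_minus {St}. Arguments exS_scal_l {St}. Arguments exS_scal_r {St}. Arguments sumS_plus {St}. Arguments sumS_minus {St}. Arguments sumS_scal_l {St}. Arguments sumS_scal_r {St}. Arguments exS_le {St}. Arguments sumS_nonneg {St}. Arguments sumS_le {St}. Arguments sumS_abs {St}. Arguments termS_le {St}.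


Section SA.
Variable A : finType.
Implicit Types f g : A -> R.

Lemma sumA_plus f g : sumA (fun a => f a + g a) = sumA f + sumA g.
Proof. rewrite /sumA; elim: (enum A) => [|a l IH] /=; [ring | rewrite IH; ring]. Qed.
Lemma sumA_scal_l c f : sumA (fun a => c * f a) = c * sumA f.
Proof. rewrite /sumA; elim: (enum A) => [|a l IH] /=; [ring | rewrite IH; ring]. Qed.
Lemma sumA_scal_r c f : sumA (fun a => f a * c) = sumA f * c.
Proof. rewrite /sumA; elim: (enum A) => [|a l IH] /=; [ring | rewrite IH; ring]. Qed.
Lemma sumA_le f g : (forall a, f a <= g a) -> sumA f <= sumA g.
Proof. move=> H; rewrite /sumA; elim: (enum A) => [|a l IH] /=; [lra | have := H a; lra]. Qed.
Lemma sumA_ext f g : (forall a, f a = g a) -> sumA f = sumA g.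
Proof. move=> H; rewrite /sumA; elim: (enum A) => [|a l IH] /=; [lra | rewrite H IH //]. Qed.

Lemma dist_bound (d h : A -> R) lo hi : is_distA d -> (forall a, lo <= h a <= hi) ->
  lo <= sumA (fun a => d a * h a) <= hi.
Proof.
move=> [H0 H1] Hh. split.
  apply: Rle_trans (sumA_le (fun a => d a * lo) _ _) ; first by rewrite sumA_scal_r H1; lra.
  move=> a; apply: Rmult_le_compat_l; [exact: H0 | by case: (Hh a)].
apply: Rle_trans (sumA_le _ (fun a => d a * hi) _) _; last by rewrite sumA_scal_r H1; lra.
move=> a; apply: Rmult_le_compat_l; [exact: H0 | by case: (Hh a)].
Qed.

Lemma sumA_nonneg f : (forall a, 0 <= f a) -> 0 <= sumA f.
Proof. move=> H; rewrite /sumA; elim: (enum A) => [|a l IH] /=; [lra | have := H a; lra]. Qed.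

Lemma sumA_sumS (St : countType) (F : A -> St -> R) : (forall a, ex_series (enc_seq (F a))) ->
  ex_series (enc_seq (fun s => sumA (fun a => F a s))) /\
  sumS (fun s => sumA (fun a => F a s)) = sumA (fun a => sumS (F a)).
Proof.
move=> H; rewrite /sumA; elim: (enum A) => [|a l [IH1 IH2]] /=.
  split; [exact: ex_zero_enc | exact: sumS_zero].
split; first exact: exS_plus.
by rewrite sumS_plus // IH2.
Qed.
End SA.
Arguments sumA_plus {A}. Arguments sumA_scal_l {A}. Arguments sumA_scal_r {A}. Arguments sumA_le {A}. Arguments sumA_ext {A}. Arguments dist_bound {A}. Arguments sumA_nonneg {A}. Arguments sumA_sumS {A St}.


Lemma exS_ext (St : countType) (f g : St -> R) : (forall x, f x = g x) ->
  ex_series (enc_seq f) -> ex_series (enc_seq g).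
Proof. move=> H Hf; apply: exs_ext Hf _ => n; exact: enc_ext. Qed.

Lemma exS_le_nn (St : countType) (f g : St -> R) : (forall x, 0 <= f x <= g x) ->
  ex_series (enc_seq g) -> ex_series (enc_seq f).
Proof. move=> H; apply: exS_le => x; rewrite Rabs_pos_eq; by case: (H x). Qed.

Lemma fubSS_nn (St : countType) (F : St -> St -> R) : (forall x y, 0 <= F x y) ->
  (forall x, ex_series (enc_seq (F x))) ->
  ex_series (enc_seq (fun x => sumS (F x))) ->
  (forall y, ex_series (enc_seq (fun x => F x y))) /\
  ex_series (enc_seq (fun y => sumS (fun x => F x y))) /\
  sumS (fun y => sumS (fun x => F x y)) = sumS (fun x => sumS (F x)).
Proof.
move=> H0 Hr Ho. apply: fubSS.
  move=> x; apply: exS_ext (Hr x) => y; rewrite Rabs_pos_eq //.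
apply: exS_ext Ho => x; apply: sumS_ext => y; rewrite Rabs_pos_eq //.
Qed.

Arguments exS_ext {St}. Arguments fubSS_nn {St}.

Lemma exN_le (a b : nat -> R) : (forall n, Rabs (a n) <= b n) -> ex_series b -> ex_series a.
Proof. move=> H Hb; apply: (ex_series_le _ _ _ Hb) => n; exact: H. Qed.

Lemma Series_le2 (a b : nat -> R) : ex_series a -> ex_series b -> (forall n, a n <= b n) ->
  Series a <= Series b.
Proof.
move=> Ha Hb H. have := Series_nonneg (fun n => b n - a n) (fun n => ltac:(have := H n; lra)).
rewrite Series_minus //. lra.
Qed.

Section Dom.
Context {St : countType} {A : finType}.
Variables (P : St -> A -> St -> R) (piE piX : St -> A -> R)
  (g : St -> bool).
Hypotheses (HP : is_kernel P) (HE : is_policy piE) (HX : is_policy piX).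

Definition Kk s s' := sumA (fun a => act_dist piE piX g s a * P s a s').

Lemma act_pol s : is_distA (act_dist piE piX g s).
Proof. rewrite /act_dist; case: (g s); [exact: HX | exact: HE]. Qed.

Lemma K_nonneg s s' : 0 <= Kk s s'.
Proof.
apply: sumA_nonneg => a; apply: Rmult_le_pos; first by case: (act_pol s).
by case: (HP s a).
Qed.

Lemma K_ex_sum s : ex_series (enc_seq (Kk s)) /\ sumS (Kk s) = 1.
Proof.
have [H1 H2] := sumA_sumS (fun a s' => act_dist piE piX g s a * P s a s')
  (fun a => exS_scal_l _ _ (proj1 (proj2 (HP s a)))).
split; first exact: H1.
rewrite /Kk H2. rewrite (sumA_ext _ (fun a => act_dist piE piX g s a * 1)).
  rewrite sumA_scal_r; case: (act_pol s) => _ ->; ring.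
move=> a; rewrite sumS_scal_l; by case: (HP s a) => _ [_ ->].
Qed.

Lemma K_le1 s s' : Kk s s' <= 1.
Proof.
have [H1 H2] := K_ex_sum s. rewrite -H2. apply: termS_le => //. exact: K_nonneg.
Qed.

Lemma d_succ s0 t s' : state_dist P piE piX g s0 (S t) s' =
  sumS (fun s => state_dist P piE piX g s0 t s * Kk s s').
Proof. by []. Qed.

Lemma d_prop t s0 : (forall s, 0 <= state_dist P piE piX g s0 t s) /\
  ex_series (enc_seq (state_dist P piE piX g s0 t)) /\ sumS (state_dist P piE piX g s0 t) = 1.
Proof.
elim: t => [|t [IH0 [IH1 IH2]]].
  have Hs : forall x, x <> s0 -> state_dist P piE piX g s0 0 x = 0.
    move=> x Hx /=. case: eqP => // .
  have [E1 E2] := spikeS _ s0 Hs.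
  split; first by move=> s /=; case: eqP => _; lra.
  split => //. rewrite E2 /=. by rewrite eqxx.
pose F s s' := state_dist P piE piX g s0 t s * Kk s s'.
have HF0 : forall s s', 0 <= F s s' by move=> s s'; apply: Rmult_le_pos; [exact: IH0 | exact: K_nonneg].
have Hr : forall s, ex_series (enc_seq (F s)).
  move=> s; apply: exS_scal_l; exact: (proj1 (K_ex_sum s)).
have Hrs : forall s, sumS (F s) = state_dist P piE piX g s0 t s.
  move=> s; rewrite /F sumS_scal_l (proj2 (K_ex_sum s)); ring.
have Ho : ex_series (enc_seq (fun x => sumS (F x))).
  apply: exS_ext IH1 => s; by rewrite Hrs.
have [_ [Hco He]] := fubSS_nn F HF0 Hr Ho.
split.
  move=> s'; rewrite d_succ; apply: sumS_nonneg => s; exact: HF0.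
split; first exact: Hco.
change (sumS (fun y => sumS (fun x => F x y)) = 1). rewrite He -IH2. exact: sumS_ext.
Qed.

Lemma d_le1 t s0 s : state_dist P piE piX g s0 t s <= 1.
Proof.
have [H0 [H1 H2]] := d_prop t s0. rewrite -H2. exact: termS_le.
Qed.

Lemma d_back t s0 x : state_dist P piE piX g s0 (S t) x =
  sumS (fun s' => Kk s0 s' * state_dist P piE piX g s' t x).
Proof.
elim: t s0 x => [|t IH] s0 x.
  rewrite d_succ.
  have [_ E1] := spikeS (fun s => state_dist P piE piX g s0 0 s * Kk s x) s0
    (fun s Hs => ltac:(rewrite /=; case: eqP => //; move=> _; ring)).
  have [_ E2] := spikeS (fun s' => Kk s0 s' * state_dist P piE piX g s' 0 x) x
    (fun s Hs => ltac:(rewrite /=; case: eqP => // ; [move=> E; by case: Hs | move=> _; ring])).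
  rewrite E1 E2 /= !eqxx; ring.
pose F s' s := Kk s0 s' * (state_dist P piE piX g s' t s * Kk s x).
have HF0 : forall s' s, 0 <= F s' s.
  move=> s' s; apply: Rmult_le_pos; first exact: K_nonneg.
  apply: Rmult_le_pos; [exact: (proj1 (d_prop t s')) | exact: K_nonneg].
have Hr : forall s', ex_series (enc_seq (F s')).
  move=> s'; apply: (exS_le_nn _ _ (fun s => Kk s0 s' * state_dist P piE piX g s' t s)).
    move=> s; split; first exact: HF0. rewrite /F. apply: Rmult_le_compat_l; first exact: K_nonneg.
    have := K_le1 s x; have := proj1 (d_prop t s') s; nra.
  apply: exS_scal_l; exact: (proj1 (proj2 (d_prop t s'))).
have Hrs : forall s', sumS (F s') = Kk s0 s' * state_dist P piE piX g s' (S t) x.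
  move=> s'; rewrite /F sumS_scal_l d_succ //.
have Ho : ex_series (enc_seq (fun s' => sumS (F s'))).
  apply: (exS_le_nn _ _ (Kk s0)); last exact: (proj1 (K_ex_sum s0)).
  move=> s'; rewrite Hrs; split.
    apply: Rmult_le_pos; [exact: K_nonneg | exact: (proj1 (d_prop (S t) s'))].
  have := d_le1 (S t) s' x; have := K_nonneg s0 s'; have := proj1 (d_prop (S t) s') x; nra.
have [_ [_ He]] := fubSS_nn F HF0 Hr Ho.
rewrite d_succ.
rewrite (sumS_ext _ (fun s => sumS (fun s' => F s' s))); last first.
  move=> s; rewrite IH -sumS_scal_r; apply: sumS_ext => s'; rewrite /F; ring.
rewrite He. apply: sumS_ext => s'. by rewrite Hrs.
Qed.

Variables (beta : R) (L : St -> A -> R) (lo : R).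
Hypothesis Hr : forall s, lo <= reward piE beta L piX g s <= 0.

Lemma r_abs s : Rabs (reward piE beta L piX g s) <= - lo.
Proof. have := Hr s; move=> [H1 H2]; rewrite Rabs_left1 //; lra. Qed.

Lemma lo_le0 : forall s : St, lo <= 0.
Proof. move=> s; have := Hr s; lra. Qed.

Lemma e_ex t s0 : ex_series (enc_seq (fun s => state_dist P piE piX g s0 t s * reward piE beta L piX g s)).
Proof.
apply: (exS_le _ (fun s => state_dist P piE piX g s0 t s * - lo)).
  move=> s; rewrite Rabs_mult Rabs_pos_eq; last exact: (proj1 (d_prop t s0)).
  apply: Rmult_le_compat_l; [exact: (proj1 (d_prop t s0)) | exact: r_abs].
apply: exS_scal_r; exact: (proj1 (proj2 (d_prop t s0))).
Qed.

Lemma e_bound t s0 : lo <= exp_reward P piE beta L piX g s0 t <= 0.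
Proof.
rewrite /exp_reward.
have H1 := sumS_le (fun s => state_dist P piE piX g s0 t s * lo) _
  (exS_scal_r lo _ (proj1 (proj2 (d_prop t s0)))) (e_ex t s0)
  (fun s => ltac:(apply: Rmult_le_compat_l; [exact: (proj1 (d_prop t s0)) | by case: (Hr s)])).
have H2 := sumS_le _ (fun _ => 0) (e_ex t s0) ex_zero_enc
  (fun s => ltac:(have := proj1 (d_prop t s0) s; have := Hr s; nra)).
rewrite sumS_scal_r (proj2 (proj2 (d_prop t s0))) in H1.
rewrite sumS_zero in H2. lra.
Qed.

Lemma e_back t s0 : exp_reward P piE beta L piX g s0 (S t) =
  sumS (fun s' => Kk s0 s' * exp_reward P piE beta L piX g s' t).
Proof.
pose r := reward piE beta L piX g.
pose G x s' := Kk s0 s' * (state_dist P piE piX g s' t x * r x).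
have HGa : forall x s', Rabs (G x s') <= Kk s0 s' * state_dist P piE piX g s' t x * - lo.
  move=> x s'; rewrite /G !Rabs_mult (Rabs_pos_eq (Kk _ _)); last exact: K_nonneg.
  rewrite (Rabs_pos_eq (state_dist _ _ _ _ _ _ _)); last exact: (proj1 (d_prop t s')).
  rewrite Rmult_assoc; apply: Rmult_le_compat_l; first exact: K_nonneg.
  apply: Rmult_le_compat_l; [exact: (proj1 (d_prop t s')) | exact: r_abs].
have HKd : forall x, ex_series (enc_seq (fun s' => Kk s0 s' * state_dist P piE piX g s' t x)).
  move=> x; apply: (exS_le_nn _ _ (Kk s0)); last exact: (proj1 (K_ex_sum s0)).
  move=> s'; have := d_le1 t s' x; have := K_nonneg s0 s'; have := proj1 (d_prop t s') x.
  split; nra.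
have Hra : forall x, ex_series (enc_seq (fun s' => Rabs (G x s'))).
  move=> x; apply: (exS_le _ (fun s' => Kk s0 s' * state_dist P piE piX g s' t x * - lo)).
    move=> s'; rewrite Rabs_Rabsolu; exact: HGa.
  apply: exS_scal_r; exact: HKd.
have Hoa : ex_series (enc_seq (fun x => sumS (fun s' => Rabs (G x s')))).
  apply: (exS_le _ (fun x => state_dist P piE piX g s0 (S t) x * - lo)).
    move=> x; rewrite Rabs_pos_eq; last by apply: sumS_nonneg => s'; exact: Rabs_pos.
    rewrite d_back -sumS_scal_r. apply: sumS_le => //.
    apply: exS_scal_r; exact: HKd.
  apply: exS_scal_r; exact: (proj1 (proj2 (d_prop (S t) s0))).
have [_ [_ He]] := fubSS G Hra Hoa.
rewrite /exp_reward.
rewrite (sumS_ext _ (fun x => sumS (fun s' => G x s'))); last first.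
  move=> x; rewrite d_back -sumS_scal_r; apply: sumS_ext => s'; rewrite /G /r; ring.
rewrite -He. apply: sumS_ext => s'. rewrite /G sumS_scal_l //.
Qed.

Variable gamma : R.
Hypothesis Hg : 0 < gamma < 1.

Lemma geom_abs : Rabs gamma < 1.
Proof. rewrite Rabs_pos_eq; lra. Qed.

Lemma v_ex s0 : ex_series (fun t => gamma ^ t * exp_reward P piE beta L piX g s0 t).
Proof.
apply: (exN_le _ (fun t => - lo * gamma ^ t)).
  move=> t; rewrite Rabs_mult (Rabs_pos_eq (gamma ^ t)); last by apply: pow_le; lra.
  have Hp : 0 <= gamma ^ t by apply: pow_le; lra.
  have := e_bound t s0; move=> [H1 H2]; rewrite Rabs_left1 //; nra.
exact: (ex_series_scal_l (- lo) _ (ex_series_geom _ geom_abs)).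
Qed.

Lemma v_bound s0 : lo / (1 - gamma) <= value P piE gamma beta L piX g s0 <= 0.
Proof.
rewrite /value; split.
  have -> : lo / (1 - gamma) = Series (fun t => lo * gamma ^ t).
    by rewrite Series_scal_l Series_geom; [rewrite /Rdiv | exact: geom_abs].
  apply: Series_le2.
  - exact: (ex_series_scal_l lo _ (ex_series_geom _ geom_abs)).
  - exact: v_ex.
  - move=> t; rewrite Rmult_comm; apply: Rmult_le_compat_l; first by apply: pow_le; lra.
    by case: (e_bound t s0).
have := Series_nonneg (fun t => - (gamma ^ t * exp_reward P piE beta L piX g s0 t)).
rewrite Series_opp. move=> H. suff: 0 <= - Series (fun t => gamma ^ t * exp_reward P piE beta L piX g s0 t) by lra.
apply: H => t. have := e_bound t s0; have : 0 <= gamma ^ t by apply: pow_le; lra. nra.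
Qed.

Lemma e0 s0 : exp_reward P piE beta L piX g s0 0 = reward piE beta L piX g s0.
Proof.
rewrite /exp_reward.
have [_ E] := spikeS (fun s => state_dist P piE piX g s0 0 s * reward piE beta L piX g s) s0
    (fun s Hs => ltac:(rewrite /=; case: eqP => //; move=> _; ring)).
rewrite E /= eqxx; ring.
Qed.

Lemma bellman s0 : value P piE gamma beta L piX g s0 =
  reward piE beta L piX g s0 + gamma * sumS (fun s' => Kk s0 s' * value P piE gamma beta L piX g s').
Proof.
rewrite {1}/value Series_incr_1; last exact: v_ex.
rewrite pow_O Rmult_1_l e0.
pose H s' t := Kk s0 s' * (gamma ^ t * exp_reward P piE beta L piX g s' t).
rewrite (Series_ext _ (fun t => gamma * sumS (fun s' => H s' t))); last first.
  move=> t; rewrite e_back /= -sumS_scal_l -sumS_scal_l; apply: sumS_ext => s'; rewrite /H; ring.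
rewrite Series_scal_l. congr (_ + gamma * _).
have HHa : forall s' t, Rabs (H s' t) <= Kk s0 s' * - lo * gamma ^ t.
  move=> s' t; rewrite /H !Rabs_mult (Rabs_pos_eq (Kk _ _)); last exact: K_nonneg.
  rewrite (Rabs_pos_eq (gamma ^ t)); last by apply: pow_le; lra.
  have Hk := K_nonneg s0 s'. have Hp : 0 <= gamma ^ t by apply: pow_le; lra.
  have := e_bound t s'; move=> [H1 H2]; rewrite Rabs_left1 //.
  have : 0 <= Kk s0 s' * gamma ^ t * (- lo + exp_reward P piE beta L piX g s' t).
    apply: Rmult_le_pos; [nra | lra].
  nra.
have Hgs : forall c, ex_series (fun t => c * gamma ^ t).
  move=> c; exact: (ex_series_scal_l c _ (ex_series_geom _ geom_abs)).
have Hra : forall s', ex_series (fun t => Rabs (H s' t)).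
  move=> s'; apply: (exN_le _ _ _ (Hgs (Kk s0 s' * - lo))).
  move=> t; rewrite Rabs_Rabsolu; exact: HHa.
have Hoa : ex_series (enc_seq (fun s' => Series (fun t => Rabs (H s' t)))).
  apply: (exS_le _ (fun s' => Kk s0 s' * (- lo / (1 - gamma)))).
    move=> s'; rewrite Rabs_pos_eq; last by apply: Series_nonneg => t; exact: Rabs_pos.
    have -> : Kk s0 s' * (- lo / (1 - gamma)) = Series (fun t => Kk s0 s' * - lo * gamma ^ t).
      rewrite Series_scal_l Series_geom; [rewrite /Rdiv; ring | exact: geom_abs].
    apply: Series_le; last exact: Hgs.
    move=> t; split; [exact: Rabs_pos | exact: HHa].
  apply: exS_scal_r; exact: (proj1 (K_ex_sum s0)).
have [_ [_ He]] := fubSN H Hra Hoa.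
rewrite He. apply: sumS_ext => s'. rewrite /H Series_scal_l //.
Qed.

End Dom.

Section Main.
Context {St : countType} {A : finType}.
Variables (P : St -> A -> St -> R) (piE piX : St -> A -> R) (gamma beta : R) (L : St -> A -> R).
Hypotheses (HP : is_kernel P) (HE : is_policy piE) (HX : is_policy piX) (Hg : 0 < gamma < 1)
  (Hb : 0 <= beta) (HL0 : forall s a, 0 <= L s a).
Variable B0 : R.
Hypothesis HB : forall s a, L s a <= B0.

Lemma reward_bound g s : - (B0 + beta) <= reward piE beta L piX g s <= 0.
Proof.
rewrite /reward. apply: dist_bound; first exact: (act_pol piE piX g HE HX s).
move=> a; case: (g s); have := HL0 s a; have := HB s a; lra.
Qed.

Definition T g (v : St -> R) s := reward piE beta L piX g s +
  gamma * sumS (fun s' => Kk P piE piX g s s' * v s').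

Lemma Kv_ex g s (v : St -> R) M : (forall s, Rabs (v s) <= M) ->
  ex_series (enc_seq (fun s' => Kk P piE piX g s s' * v s')).
Proof.
move=> Hv. apply: (exS_le _ (fun s' => Kk P piE piX g s s' * M)).
  move=> s'; rewrite Rabs_mult Rabs_pos_eq; last exact: K_nonneg.
  apply: Rmult_le_compat_l; [exact: K_nonneg | exact: Hv].
apply: exS_scal_r; exact: (proj1 (K_ex_sum P piE piX g HP HE HX s)).
Qed.

Lemma T_local g g' v s : g s = g' s -> T g v s = T g' v s.
Proof. move=> E. by rewrite /T /reward /Kk /act_dist E. Qed.

Lemma T_M g (v : St -> R) M s : (forall s, Rabs (v s) <= M) -> g s = true ->
  T g v s = Mop P gamma beta L piX v s.
Proof.
move=> Hv E. rewrite /T /Mop /reward /Kk /act_dist E.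
have Hex : forall a, ex_series (enc_seq (fun s' => piX s a * (P s a s' * v s'))).
  move=> a; apply: exS_scal_l. apply: (exS_le _ (fun s' => P s a s' * M)).
    move=> s'; rewrite Rabs_mult Rabs_pos_eq; last by case: (HP s a).
    apply: Rmult_le_compat_l; [by case: (HP s a) | exact: Hv].
  apply: exS_scal_r; by case: (HP s a) => _ [].
have [_ E2] := sumA_sumS (fun a s' => piX s a * (P s a s' * v s')) Hex.
rewrite (sumS_ext _ (fun s' => sumA (fun a => piX s a * (P s a s' * v s')))); last first.
  move=> s'; rewrite -sumA_scal_r; apply: sumA_ext => a; ring.
rewrite E2.
rewrite (sumA_ext (fun a => piX s a * (- L s a - beta + gamma * sumS (fun s' => P s a s' * v s')))
   (fun a => piX s a * (- L s a - beta) + gamma * sumS (fun s' => piX s a * (P s a s' * v s')))).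
  rewrite sumA_plus sumA_scal_l //.
move=> a; rewrite sumS_scal_l; ring.
Qed.

Lemma T_uniq g (u1 u2 : St -> R) M : (forall s, Rabs (u1 s) <= M) -> (forall s, Rabs (u2 s) <= M) ->
  (forall s, u1 s = T g u1 s) -> (forall s, u2 s = T g u2 s) -> forall s, u1 s = u2 s.
Proof.
move=> H1 H2 E1 E2.
have Hn : forall n s, Rabs (u1 s - u2 s) <= gamma ^ n * (2 * M).
  elim=> [|n IH] s.
    rewrite /= /Rminus; have := Rabs_triang (u1 s) (- u2 s); rewrite Rabs_Ropp.
    have := H1 s; have := H2 s; lra.
  have Hd : u1 s - u2 s = gamma * sumS (fun s' => Kk P piE piX g s s' * (u1 s' - u2 s')).
    rewrite E1 E2 /T.
    have -> : sumS (fun s' => Kk P piE piX g s s' * (u1 s' - u2 s')) =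
      sumS (fun s' => Kk P piE piX g s s' * u1 s' - Kk P piE piX g s s' * u2 s')
      by apply: sumS_ext => s'; ring.
    rewrite sumS_minus; [ring | exact: (Kv_ex _ _ _ M) | exact: (Kv_ex _ _ _ M)].
  have Hpt : forall s', Rabs (Kk P piE piX g s s' * (u1 s' - u2 s')) <=
      Kk P piE piX g s s' * (gamma ^ n * (2 * M)).
    move=> s'; rewrite Rabs_mult Rabs_pos_eq; last exact: K_nonneg.
    apply: Rmult_le_compat_l; [exact: K_nonneg | exact: IH].
  have Hex : ex_series (enc_seq (fun s' => Rabs (Kk P piE piX g s s' * (u1 s' - u2 s')))).
    apply: (exS_le _ (fun s' => Kk P piE piX g s s' * (gamma ^ n * (2 * M)))).
      move=> s'; rewrite Rabs_Rabsolu Rabs_mult Rabs_pos_eq; last exact: K_nonneg.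
      apply: Rmult_le_compat_l; [exact: K_nonneg | exact: IH].
    apply: exS_scal_r; exact: (proj1 (K_ex_sum P piE piX g HP HE HX s)).
  rewrite Hd Rabs_mult Rabs_pos_eq; last lra.
  rewrite /= Rmult_assoc. apply: Rmult_le_compat_l; first lra.
  apply: Rle_trans (sumS_abs _ Hex) _.
  have := sumS_le _ (fun s' => Kk P piE piX g s s' * (gamma ^ n * (2 * M))) Hex
    (exS_scal_r _ _ (proj1 (K_ex_sum P piE piX g HP HE HX s))) Hpt.
  rewrite sumS_scal_r (proj2 (K_ex_sum P piE piX g HP HE HX s)). lra.
move=> s. apply: Rminus_diag_uniq.
have HM : 0 <= M by have := H1 s; have := Rabs_pos (u1 s); lra.
case: (Req_dec (u1 s - u2 s) 0) => // Hne. exfalso.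
have Hpos : 0 < Rabs (u1 s - u2 s) by apply: Rabs_pos_lt.
have [N HN] := pow_lt_1_zero gamma (ltac:(rewrite Rabs_pos_eq; lra)) (Rabs (u1 s - u2 s) / (2 * M + 1))
  (ltac:(apply: Rdiv_lt_0_compat; lra)).
have Hq := HN N (le_n N). have Hc := Hn N s.
rewrite (Rabs_pos_eq (gamma ^ N)) in Hq; last by apply: pow_le; lra.
have Hp : 0 <= gamma ^ N by apply: pow_le; lra.
have H3 : gamma ^ N * (2 * M + 1) < Rabs (u1 s - u2 s) / (2 * M + 1) * (2 * M + 1).
  apply: Rmult_lt_compat_r; lra.
have E : Rabs (u1 s - u2 s) / (2 * M + 1) * (2 * M + 1) = Rabs (u1 s - u2 s) by field; lra.
rewrite E in H3. nra.
Qed.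

End Main.

Lemma lub_ge (E : R -> Prop) y : (forall x, E x -> x <= 0) -> E y -> y <= real (Lub_Rbar E).
Proof.
move=> Hub Ey. have [H1 H2] := Lub_Rbar_correct E.
have Hle0 : Rbar_le (Lub_Rbar E) 0 by apply: H2 => x Ex; exact: Hub.
have Hy := H1 y Ey.
move: Hle0 Hy. case: (Lub_Rbar E) => [r| |] //=.
Qed.

Lemma gstar_true (St : countType) (A : finType) P gamma beta L (piX : St -> A -> R) v s :
  gstar P gamma beta L piX v s = true <-> Mop P gamma beta L piX v s = v s.
Proof. rewrite /gstar; case: Req_EM_T => E; split => //. Qed.

Theorem proposition2 (St : countType) (A : finType) (P : St -> A -> St -> R)
  (piE : St -> A -> R) (gamma beta : R) (L : St -> A -> R) :
  is_kernel P -> is_policy piE -> 0 < gamma < 1 -> 0 < beta ->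
  (forall s a, 0 <= L s a) -> (exists B, forall s a, L s a <= B) ->
  (* (i) *)
  (forall (piX : St -> A -> R) (g0 : St -> bool),
     is_optimal P piE gamma beta L piX g0 ->
     forall s,
       value P piE gamma beta L piX
         (gstar P gamma beta L piX (vstar P piE gamma beta L)) s
       = vstar P piE gamma beta L s)
  /\
  (* (ii) *)
  (forall (s0 : St) (eps : R), 0 < eps ->
     exists delta, 0 < delta /\
       forall (L' : St -> A -> R) (l : R), 0 < l < delta ->
         (forall s a, 0 <= L' s a) -> (forall s a, L' s a <= l) ->
         (exists s a, L' s a = l) ->
         forall (piX : St -> A -> R) (g : St -> bool),
           is_optimal P piE gamma beta L' piX g ->
           Rbar_le (mu P piE piX g s0) eps).
Proof.
move=> HP HE Hg Hb HL0 [B HB].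
have Hb' : 0 <= beta by lra.
split.
- move=> piX g0 [HX Hopt].
  pose B0 := Rmax B 0.
  have HB0 : forall s a, L s a <= B0 by move=> s a; apply: Rle_trans (HB s a) (Rmax_l _ _).
  have HB00 : 0 <= B0 by apply: Rmax_r.
  pose lo := - (B0 + beta).
  have Hr : forall g s, lo <= reward piE beta L piX g s <= 0 :=
    reward_bound piE piX beta L HE HX Hb' HL0 B0 HB0.
  pose M := - (lo / (1 - gamma)).
  have Hvb : forall g s, Rabs (value P piE gamma beta L piX g s) <= M.
    move=> g s; have [H1 H2] := v_bound P piE piX g HP HE HX beta L lo (Hr g) gamma Hg s.
    rewrite Rabs_left1 // /M; lra.
  pose vs := vstar P piE gamma beta L.
  have Hvs : forall s, vs s = value P piE gamma beta L piX g0 s by move=> s; rewrite Hopt.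
  have Hvsb : forall s, Rabs (vs s) <= M by move=> s; rewrite Hvs; exact: Hvb.
  pose gs := gstar P gamma beta L piX vs.
  have Fix : forall g s, value P piE gamma beta L piX g s =
      T P piE piX gamma beta L g (value P piE gamma beta L piX g) s.
    move=> g s; exact: (bellman P piE piX g HP HE HX beta L lo (Hr g) gamma Hg s).
  have Fix0 : forall s, vs s = T P piE piX gamma beta L g0 vs s.
    move=> s; rewrite Hvs Fix /T; congr (_ + gamma * _); apply: sumS_ext => s'; by rewrite Hvs.
  have Fixs : forall s, vs s = T P piE piX gamma beta L gs vs s.
    move=> s. case E0: (g0 s).
      have EM : vs s = Mop P gamma beta L piX vs s by rewrite Fix0 (T_M P piE piX gamma beta L HP g0 vs M s Hvsb E0).
      have Es : gs s = true by apply/gstar_true.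
      rewrite (T_M P piE piX gamma beta L HP gs vs M s Hvsb Es); exact: EM.
    case Es: (gs s).
      rewrite (T_M P piE piX gamma beta L HP gs vs M s Hvsb Es). symmetry; exact/gstar_true.
    rewrite (T_local P piE piX gamma beta L gs g0 vs s); last by rewrite Es E0.
    exact: Fix0.
  move=> s. apply: (T_uniq P piE piX gamma beta L HP HE HX Hg gs _ _ M).
  - move=> s'; exact: Hvb.
  - exact: Hvsb.
  - move=> s'; exact: Fix.
  - exact: Fixs.
- move=> s0 eps Heps. exists (beta * (1 - gamma)). split; first by nra.
  move=> L' l [Hl Hld] HL'0 HL'l _ piX g [HX Hopt].
  have Hgf : forall s, g s = false.
    move=> s. case Egs: (g s) => //. exfalso.
    have Hr : forall g' s, - (l + beta) <= reward piE beta L' piX g' s <= 0 :=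
      reward_bound piE piX beta L' HE HX Hb' HL'0 l HL'l.
    have Hup : vstar P piE gamma beta L' s <= - beta.
      rewrite -Hopt (bellman P piE piX g HP HE HX beta L' _ (Hr g) gamma Hg s).
      have Hrw : reward piE beta L' piX g s <= - beta.
        rewrite /reward /act_dist Egs.
        have := dist_bound (piX s) (fun a => - L' s a - beta) (- (l + beta)) (- beta) (HX s)
          (fun a => ltac:(have := HL'0 s a; have := HL'l s a; lra)). lra.
      pose M := - (- (l + beta) / (1 - gamma)).
      have Hvb : forall s', Rabs (value P piE gamma beta L' piX g s') <= M.
        move=> s'; have [H1 H2] := v_bound P piE piX g HP HE HX beta L' _ (Hr g) gamma Hg s'.
        rewrite Rabs_left1 // /M; lra.
      have Hs : sumS (fun s' => Kk P piE piX g s s' * value P piE gamma beta L' piX g s') <= 0.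
        have := sumS_le _ (fun _ => 0) (Kv_ex P piE piX HP HE HX g s _ M Hvb) ex_zero_enc
          (fun s' => ltac:(have := K_nonneg P piE piX g HP HE HX s s';
             have := proj2 (v_bound P piE piX g HP HE HX beta L' _ (Hr g) gamma Hg s'); nra)).
        by rewrite sumS_zero.
      nra.
    have Hrf : forall s, - l <= reward piE beta L' piX (fun _ => false) s <= 0.
      move=> s'; rewrite /reward /act_dist /=.
      apply: dist_bound; first exact: HE.
      move=> a; have := HL'0 s' a; have := HL'l s' a; lra.
    have Hlow := proj1 (v_bound P piE piX (fun _ => false) HP HE HX beta L' (- l) Hrf gamma Hg s).
    have Hge : value P piE gamma beta L' piX (fun _ => false) s <= vstar P piE gamma beta L' s.
      rewrite /vstar. apply: lub_ge.
        move=> x [piX' [g' [HX' ->]]].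
        exact: (proj2 (v_bound P piE piX' g' HP HE HX' beta L' _
                 (reward_bound piE piX' beta L' HE HX' Hb' HL'0 l HL'l g') gamma Hg s)).
      by exists piX, (fun _ => false).
    have Hq : 0 < 1 - gamma by lra.
    have : - l / (1 - gamma) <= - beta by lra.
    move=> H. have : - l <= - beta * (1 - gamma).
      have E : - l = - l / (1 - gamma) * (1 - gamma) by field; lra.
      rewrite E. apply: Rmult_le_compat_r; lra.
    lra.
  rewrite /mu.
  rewrite (Lim_seq_ext _ (fun _ => 0)).
    rewrite Lim_seq_const /=; lra.
  move=> n. rewrite (sum_n_ext _ (fun _ => 0)).
    rewrite sum_n_const; ring.
  move=> t. rewrite (sumS_ext _ (fun _ => 0)); first exact: sumS_zero.
  move=> s; rewrite Hgf; ring.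
Qed.
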